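(* Let $(\varGamma,C)$ be a split-step SUSYQW whose coin has the form $C(x)=C(\mathrm R)$ for $x\ge1$ and $C(x)=C(\mathrm L)$ for $x\le0$, where $C(\mathrm L),C(\mathrm R)$ are nontrivial. Let $d_\pm=\dim\ker Q_{\epsilon_\pm}$. (1) If $b(\mathrm L)=0$ and $b(\mathrm R)=0$ (Type I), then $d_\pm=1$ if $a(\mathrm L)a(\mathrm R)<0$ and $d_\pm=0$ if $a(\mathrm L)a(\mathrm R)>0$. (2) If $b(\mathrm L)=0$ and $b(\mathrm R)\ne0$ (Type II), then $d_\pm=1$ if $\mp p+a(\mathrm L)a(\mathrm R)<0$ and $d_\pm=0$ if $\mp p+a(\mathrm L)a(\mathrm R)\ge0$. (3) If $b(\mathrm L)\neq0$ and $b(\mathrm R)=0$ (Type II'), then $d_\pm=1$ if $\pm p+a(\mathrm L)a(\mathrm R)<0$ and $d_\pm=0$ if $\pm p+a(\mathrm L)a(\mathrm R)\ge0$. (4) If $b(\mathrm L)\ne0$ and $b(\mathrm R)\ne0$ (Type III), then $d_\pm=1$ if $a(\mathrm R)<\pm p<a(\mathrm L)$ or $a(\mathrm L)<\mp p<a(\mathrm R)$, and $d_\pm=0$ otherwise. (In each case the upper signs give $d_+$ and the lower signs give $d_-$.)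
   Context: Let $L$ be the left shift $(L\Psi)(x)=\Psi(x+1)$ on $\ell^2(\mathbb Z)$. A split-step SUSYQW is $\varGamma=\begin{pmatrix} p & qL\\ \overline{q}L^* & -p\end{pmatrix}$, $C=\begin{pmatrix} a_1 & \overline{b}\\ b & a_2\end{pmatrix}$ on $\ell^2(\mathbb Z)\oplus\ell^2(\mathbb Z)$ with $p\in\mathbb R$, $q\in\mathbb C\setminus\{0\}$, $p^2+|q|^2=1$, $\theta=\operatorname{Arg}q$, real sequences $a_1,a_2$ and complex sequence $b$ on $\mathbb Z$ (as multiplication operators) with $a_j(x)^2+|b(x)|^2=1$, $b(x)(a_1(x)+a_2(x))=0$. Write $C(x)=\begin{pmatrix} a_1(x)&\overline{b(x)}\\ b(x)&a_2(x)\end{pmatrix}$. A $2\times2$ unitary Hermitian matrix is trivial if it equals $\pm I$; for nontrivial $C(\sharp)$ (entries $a_j(\sharp),b(\sharp)$) one has $a_1(\sharp)=-a_2(\sharp)=:a(\sharp)$ and $a(\sharp)^2+|b(\sharp)|^2=1$. $Q_{\epsilon_\pm}$ are the operators on $\ell^2(\mathbb Z)$ defined by $-2iQ_{\epsilon_\pm}=(1\pm p)e^{i\theta}Lb-(1\mp p)e^{-i\theta}\overline{b}L^*\pm|q|(a_2(\cdot+1)-a_1)$ (products are compositions with multiplication operators). *)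

(* Defs.v *)
From Stdlib Require Import Reals Lra ZArith List.
Open Scope R_scope.

Definition Cx : Type := (R * R)%type.
Definition Cre (z : Cx) : R := fst z.
Definition Cim (z : Cx) : R := snd z.
Definition CR (r : R) : Cx := (r, 0).
Definition C0 : Cx := (0, 0).
Definition Ci : Cx := (0, 1).
Definition Cadd (z w : Cx) : Cx := (Cre z + Cre w, Cim z + Cim w).
Definition Copp (z : Cx) : Cx := (- Cre z, - Cim z).
Definition Cmul (z w : Cx) : Cx :=
  (Cre z * Cre w - Cim z * Cim w, Cre z * Cim w + Cim z * Cre w).
Definition Cconj (z : Cx) : Cx := (Cre z, - Cim z).
Definition Cnorm2 (z : Cx) : R := Cre z * Cre z + Cim z * Cim z.
Definition Cabs (z : Cx) : R := sqrt (Cnorm2 z).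
Definition Cinv (z : Cx) : Cx := (Cre z / Cnorm2 z, - Cim z / Cnorm2 z).

(* e^{i Arg q} = q / |q|  (for q <> 0) *)
Definition expiArg (q : Cx) : Cx := Cmul (CR (/ Cabs q)) q.

Definition state := Z -> Cx.

(* symmetric partial sums  sum_{x=-n}^{n} |psi x|^2 *)
Definition l2_partial (psi : state) (n : nat) : R :=
  sum_f_R0 (fun k => Cnorm2 (psi (Z.of_nat k - Z.of_nat n)%Z)) (2 * n).

Definition in_l2 (psi : state) : Prop :=
  exists l : R, Un_cv (l2_partial psi) l.

Definition sgn (s : bool) : R := if s then 1 else -1.

(* (-2i Q_eps psi)(x) =
     (1 + s p) e^{i th} b(x+1) psi(x+1)
   - (1 - s p) e^{-i th} conj(b(x)) psi(x-1)
   + s |q| (a2(x+1) - a1(x)) psi(x),   s = +1 for eps_+, -1 for eps_- *)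
Definition minus2iQ (s : bool) (p : R) (q : Cx)
    (a1 a2 : Z -> R) (b : Z -> Cx) (psi : state) : state :=
  fun x =>
    Cadd (Cadd
      (Cmul (CR (1 + sgn s * p)) (Cmul (expiArg q) (Cmul (b (x + 1)%Z) (psi (x + 1)%Z))))
      (Copp (Cmul (CR (1 - sgn s * p))
               (Cmul (Cconj (expiArg q)) (Cmul (Cconj (b x)) (psi (x - 1)%Z))))))
      (Cmul (CR (sgn s * Cabs q * (a2 (x + 1)%Z - a1 x))) (psi x)).

(* Q_eps = (-2i)^{-1} (-2i Q_eps) = (i/2) (-2i Q_eps) *)
Definition Qeps (s : bool) (p : R) (q : Cx)
    (a1 a2 : Z -> R) (b : Z -> Cx) (psi : state) : state :=
  fun x => Cmul (0, / 2) (minus2iQ s p q a1 a2 b psi x).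

Definition in_kernel (T : state -> state) (psi : state) : Prop :=
  in_l2 psi /\ forall x, T psi x = C0.

Definition lincomb (n : nat) (c : nat -> Cx) (e : nat -> state) : state :=
  fun x => fold_right Cadd C0 (map (fun k => Cmul (c k) (e k x)) (seq 0 n)).

Definition kernel_dim (T : state -> state) (n : nat) : Prop :=
  exists e : nat -> state,
    (forall k, (k < n)%nat -> in_kernel T (e k)) /\
    (forall c : nat -> Cx,
        (forall x, lincomb n c e x = C0) -> forall k, (k < n)%nat -> c k = C0) /\
    (forall psi, in_kernel T psi ->
        exists c : nat -> Cx, forall x, psi x = lincomb n c e x).

(* a 2x2 matrix [[a1, conj b],[b, a2]] (a1,a2 real) is unitary & Hermitian
   of the SUSYQW form *)
Definition coin_ok (a1 a2 : R) (b : Cx) : Prop :=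
  a1 * a1 + Cnorm2 b = 1 /\ a2 * a2 + Cnorm2 b = 1 /\
  Cmul b (CR (a1 + a2)) = C0.

Definition coin_nontrivial (a1 a2 : R) (b : Cx) : Prop :=
  ~ (a1 = 1 /\ a2 = 1 /\ b = C0) /\ ~ (a1 = -1 /\ a2 = -1 /\ b = C0).

(* Main.v *)
From Coquelicot Require Import Coquelicot.
Require Import Defs.
From Stdlib Require Import Reals ZArith Lra Lia Psatz List.
Open Scope R_scope.

Lemma Cadd_eq z w : Defs.Cadd z w = Cplus z w. Proof. reflexivity. Qed.
Lemma Cmul_eq z w : Defs.Cmul z w = Cmult z w. Proof. reflexivity. Qed.
Lemma Copp_eq z : Defs.Copp z = Complex.Copp z. Proof. reflexivity. Qed.
Lemma Cconj_eq z : Defs.Cconj z = Complex.Cconj z. Proof. reflexivity. Qed.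
Lemma C0_eq : C0 = RtoC 0. Proof. reflexivity. Qed.
Lemma CR_eq r : CR r = RtoC r. Proof. reflexivity. Qed.

Ltac toC := match goal with |- ?a = ?b => change (@eq Complex.C a b) end.
Ltac cdes := repeat match goal with z : Complex.C |- _ => destruct z end.
Ltac ceq := apply injective_projections; simpl; ring.

Lemma Cnorm2_mul z w : Cnorm2 (z * w)%C = Cnorm2 z * Cnorm2 w.
Proof. destruct z, w; unfold Cnorm2, Cre, Cim; simpl; ring. Qed.
Lemma Cnorm2_conj z : Cnorm2 (Complex.Cconj z) = Cnorm2 z.
Proof. destruct z; unfold Cnorm2, Cre, Cim; simpl; ring. Qed.
Lemma Cnorm2_RtoC r : Cnorm2 (RtoC r) = r * r.
Proof. unfold Cnorm2, Cre, Cim, RtoC; simpl; ring. Qed.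
Lemma Cnorm2_ge0 z : 0 <= Cnorm2 z.
Proof. destruct z; unfold Cnorm2, Cre, Cim; simpl; nra. Qed.
Lemma Cnorm2_eq0 z : Cnorm2 z = 0 -> z = RtoC 0.
Proof. destruct z as [x y]; unfold Cnorm2, Cre, Cim; simpl; intro H.
  assert (x = 0) by nra. assert (y = 0) by nra. subst. reflexivity. Qed.
Lemma Cnorm2_pos z : z <> RtoC 0 -> 0 < Cnorm2 z.
Proof. intro H. destruct (Cnorm2_ge0 z); auto. exfalso; apply H, Cnorm2_eq0; auto. Qed.
Lemma conj_mul_self z : (z * Complex.Cconj z)%C = RtoC (Cnorm2 z).
Proof. destruct z; unfold Cnorm2, Cre, Cim, RtoC; ceq. Qed.
Lemma conj_self_mul z : (Complex.Cconj z * z)%C = RtoC (Cnorm2 z).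
Proof. destruct z; unfold Cnorm2, Cre, Cim, RtoC; ceq. Qed.
Lemma Cconj_mul z w : Complex.Cconj (z * w)%C = (Complex.Cconj z * Complex.Cconj w)%C.
Proof. destruct z, w; ceq. Qed.
Lemma Cconj_RtoC r : Complex.Cconj (RtoC r) = RtoC r.
Proof. unfold RtoC; apply injective_projections; simpl; ring. Qed.
Lemma Cconj_inv z : Complex.Cconj (Complex.Cconj z) = z.
Proof. destruct z; ceq. Qed.
Lemma Cnorm2_sub z w : Cnorm2 (z - w)%C <= 2 * Cnorm2 z + 2 * Cnorm2 w.
Proof. destruct z as [r r0], w as [r1 r2]; unfold Cnorm2, Cre, Cim, Cminus, Cplus, Complex.Copp; simpl.
  pose proof (pow2_ge_0 (r+r1)); pose proof (pow2_ge_0 (r0+r2)). nra. Qed.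

Fixpoint cpow (z : Complex.C) (n : nat) : Complex.C :=
  match n with O => RtoC 1 | S m => (z * cpow z m)%C end.
Lemma Cnorm2_cpow z n : Cnorm2 (cpow z n) = (Cnorm2 z) ^ n.
Proof. induction n; simpl. rewrite Cnorm2_RtoC; ring. rewrite Cnorm2_mul, IHn; ring. Qed.
Lemma cpow_0n n : cpow (RtoC 0) (S n) = RtoC 0.
Proof. simpl. ring. Qed.

Lemma Cmul_integral z w : (z * w)%C = RtoC 0 -> z = RtoC 0 \/ w = RtoC 0.
Proof. intro H. assert (H2 : Cnorm2 (z * w)%C = 0) by (rewrite H, Cnorm2_RtoC; ring).
  rewrite Cnorm2_mul in H2. destruct (Rmult_integral _ _ H2); [left|right]; apply Cnorm2_eq0; auto. Qed.
Lemma Cmul_cancel a x y : a <> RtoC 0 -> (a * x)%C = (a * y)%C -> x = y.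
Proof. intros Ha H. replace x with (/ a * (a * x))%C by (field; auto).
  rewrite H. field; auto. Qed.
Lemma RtoC_neq r : r <> 0 -> RtoC r <> RtoC 0.
Proof. intros H H2. apply H. injection H2; auto. Qed.

Definition fR (psi : state) (n : nat) : Complex.C := psi (Z.of_nat n).
Definition gL (psi : state) (n : nat) : Complex.C := psi (- Z.of_nat n)%Z.

Lemma l2_partial_S psi n :
  l2_partial psi (S n) = l2_partial psi n + Cnorm2 (fR psi (S n)) + Cnorm2 (gL psi (S n)).
Proof.
  unfold l2_partial, fR, gL.
  replace (2 * S n)%nat with (S (S (2 * n))) by lia.
  rewrite decomp_sum by lia. change (Init.Nat.pred (S (S (2 * n)))) with (S (2 * n)).
  rewrite tech5.
  rewrite (sum_eq (fun i => Cnorm2 (psi (Z.of_nat (S i) - Z.of_nat (S n))%Z))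
                  (fun k => Cnorm2 (psi (Z.of_nat k - Z.of_nat n)%Z))).
  2:{ intros i _. f_equal. f_equal. lia. }
  replace (Z.of_nat 0 - Z.of_nat (S n))%Z with (- Z.of_nat (S n))%Z by lia.
  replace (Z.of_nat (S (S (2 * n))) - Z.of_nat (S n))%Z with (Z.of_nat (S n)) by lia.
  ring.
Qed.

Lemma l2_partial_0 psi : l2_partial psi 0 = Cnorm2 (psi 0%Z).
Proof. unfold l2_partial. simpl. reflexivity. Qed.

Lemma l2_decay psi : in_l2 psi ->
  Un_cv (fun n => Cnorm2 (fR psi n)) 0 /\ Un_cv (fun n => Cnorm2 (gL psi n)) 0.
Proof.
  intros [l Hl].
  assert (H : forall eps, eps > 0 -> exists N, forall n, (n >= N)%nat ->
     Cnorm2 (fR psi n) + Cnorm2 (gL psi n) < eps).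
  { intros eps He. destruct (Hl (eps/2)) as [N HN]; [lra|].
    exists (S N). intros n Hn. destruct n as [|m]; [lia|].
    pose proof (HN m ltac:(lia)) as A1. pose proof (HN (S m) ltac:(lia)) as A2.
    rewrite l2_partial_S in A2. unfold Rdist in *.
    apply Rabs_def2 in A1. apply Rabs_def2 in A2. lra. }
  split; intros eps He; destruct (H eps He) as [N HN]; exists N; intros n Hn;
    specialize (HN n Hn); unfold Rdist; rewrite Rminus_0_r;
    pose proof (Cnorm2_ge0 (fR psi n)); pose proof (Cnorm2_ge0 (gL psi n));
    rewrite Rabs_right; lra.
Qed.

Lemma l2_suff psi (r K : R) : 0 <= r < 1 -> 0 <= K ->
  (forall n, Cnorm2 (fR psi n) <= K * r ^ n) ->
  (forall n, Cnorm2 (gL psi n) <= K * r ^ n) -> in_l2 psi.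
Proof.
  intros Hr HK Hf Hg.
  assert (Hb : forall n, l2_partial psi n <= 2 * K * sum_f_R0 (fun i => r ^ i) n).
  { induction n.
    - rewrite l2_partial_0. simpl. specialize (Hf 0%nat). unfold fR in Hf. simpl in Hf. lra.
    - rewrite l2_partial_S, tech5. specialize (Hf (S n)); specialize (Hg (S n)). nra. }
  assert (Hs : forall n, sum_f_R0 (fun i => r ^ i) n <= / (1 - r)).
  { intro n. rewrite tech3 by lra. unfold Rdiv.
    rewrite <- (Rmult_1_l (/ (1 - r))) at 2.
    apply Rmult_le_compat_r. apply Rlt_le, Rinv_0_lt_compat; lra.
    pose proof (pow_le r (S n) (proj1 Hr)). lra. }
  destruct (growing_cv (l2_partial psi)) as [l Hl].
  - intro n. rewrite l2_partial_S. pose proof (Cnorm2_ge0 (fR psi (S n))).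
    pose proof (Cnorm2_ge0 (gL psi (S n))). lra.
  - exists (2 * K * / (1 - r)). intros x [i ->].
    specialize (Hb i). specialize (Hs i). nra.
  - exists l; exact Hl.
Qed.

Definition gen_kernel (T : state -> state) (psi : state) := in_kernel T psi.

Lemma kdim0 T : (forall psi, in_kernel T psi -> forall x, psi x = C0) -> kernel_dim T 0.
Proof.
  intros H. exists (fun _ _ => C0). split; [intros; lia|]. split; [intros; lia|].
  intros psi Hp. exists (fun _ => C0). intro x. rewrite (H psi Hp x). reflexivity.
Qed.

Lemma kdim1 T e : in_kernel T e -> (exists x, e x <> C0) ->
  (forall psi, in_kernel T psi -> exists c, forall x, psi x = (c * e x)%C) -> kernel_dim T 1.
Proof.
  intros He [x0 Hx0] H. exists (fun _ => e). split; [intros; auto|]. split.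
  - intros c Hc k Hk. assert (k = 0%nat) by lia. subst k.
    specialize (Hc x0). unfold lincomb in Hc. cbn [map seq fold_right] in Hc.
    change (Cplus (Cmult (c 0%nat) (e x0)) (RtoC 0) = RtoC 0) in Hc. rewrite Cplus_0_r in Hc.
    destruct (Cmul_integral _ _ Hc); auto. contradiction.
  - intros psi Hp. destruct (H psi Hp) as [c Hc]. exists (fun _ => c). intro x.
    unfold lincomb; cbn [map seq fold_right]. rewrite Hc.
    change ((c * e x)%C = Cplus (Cmult c (e x)) (RtoC 0)). ring.
Qed.

Lemma Csub0 x y : (x - y = RtoC 0)%C -> x = y.
Proof. intro H. replace x with (x - y + y)%C by ring. rewrite H. ring. Qed.
Open Scope C_scope.
Lemma rec_vtrick (h : nat -> Complex.C) (l m : Complex.C) :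
  (forall k, h (S (S k)) = (l + m) * h (S k) - l * m * h k) ->
  forall k, h (S k) - m * h k = cpow l k * (h 1%nat - m * h 0%nat).
Proof. intros H k. induction k. simpl; ring. simpl cpow. rewrite H.
  transitivity (l * (h (S k) - m * h k)). ring. rewrite IHk. ring. Qed.

Lemma rec_geom (h : nat -> Complex.C) (l m : Complex.C) :
  (forall k, h (S (S k)) = (l + m) * h (S k) - l * m * h k) ->
  h 1%nat = m * h 0%nat -> forall k, h k = cpow m k * h 0%nat.
Proof. intros H H1.
  assert (forall k, h k = cpow m k * h 0%nat /\ h (S k) = cpow m (S k) * h 0%nat).
  { induction k. split. simpl; ring. simpl; rewrite H1; ring.
    destruct IHk as [A B]. split; auto. rewrite H, A, B. simpl; ring. }
  intro k; apply H0. Qed.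
Close Scope C_scope.

Lemma decay_zero (h : nat -> Complex.C) (l m d : Complex.C) :
  Un_cv (fun n => Cnorm2 (h n)) 0 -> 1 <= Cnorm2 l ->
  (forall k, (h (S k) - m * h k = cpow l k * d)%C) -> d = RtoC 0.
Proof.
  intros Hcv Hl Hk. apply Cnorm2_eq0.
  destruct (Cnorm2_ge0 d) as [Hd|Hd]; [|auto]. exfalso.
  set (K := 2 + 2 * Cnorm2 m). assert (HK : 0 < K) by (pose proof (Cnorm2_ge0 m); unfold K; lra).
  destruct (Hcv (Cnorm2 d / (2 * K))) as [N HN].
  { apply Rlt_gt. apply Rdiv_lt_0_compat; lra. }
  pose proof (HN N (le_n N)) as A1. pose proof (HN (S N) ltac:(lia)) as A2.
  unfold Rdist in A1, A2. rewrite Rminus_0_r in A1, A2.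
  rewrite Rabs_right in A1 by (apply Rle_ge, Cnorm2_ge0).
  rewrite Rabs_right in A2 by (apply Rle_ge, Cnorm2_ge0).
  pose proof (Cnorm2_sub (h (S N)) (m * h N)%C) as A3.
  rewrite Hk, Cnorm2_mul, Cnorm2_cpow, Cnorm2_mul in A3.
  pose proof (pow_R1_Rle _ N Hl) as A4.
  assert (A5 : Cnorm2 d <= Cnorm2 l ^ N * Cnorm2 d) by nra.
  assert (A6 : Cnorm2 d / (2 * K) * (2 * K) = Cnorm2 d) by (field; lra).
  pose proof (Cnorm2_ge0 m). pose proof (Cnorm2_ge0 (h N)). unfold K in *. nra.
Qed.

Lemma geom_not_decay (h : nat -> Complex.C) (m c : Complex.C) :
  Un_cv (fun n => Cnorm2 (h n)) 0 -> 1 <= Cnorm2 m ->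
  (forall k, h k = (cpow m k * c)%C) -> c = RtoC 0.
Proof.
  intros Hcv Hm Hk.
  assert (H : (m * c)%C = RtoC 0).
  { apply (decay_zero h m (RtoC 0)); auto. intro k. rewrite !Hk. simpl. ring. }
  destruct (Cmul_integral _ _ H); auto.
  subst m. rewrite Cnorm2_RtoC in Hm. lra.
Qed.

Definition lam (P n c D : R) (b : Complex.C) (sg : bool) : Complex.C :=
  (RtoC ((c + sgn sg * D) / (P * n)) * Complex.Cconj b)%C.

Lemma side_rec (P M n c D : R) (b : Complex.C) (h : nat -> Complex.C) :
  0 < P -> 0 < n -> Cnorm2 b = n -> D * D = c * c + P * M * n ->
  (forall k, (RtoC P * (b * h (S (S k))) - RtoC M * (Complex.Cconj b * h k)
              - RtoC (2 * c) * h (S k) = RtoC 0)%C) ->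
  forall k, h (S (S k)) = ((lam P n c D b true + lam P n c D b false) * h (S k)
                 - lam P n c D b true * lam P n c D b false * h k)%C.
Proof.
  intros HP Hn Hb HD Hrec k.
  assert (Hb0 : b <> RtoC 0).
  { intro E. subst b. rewrite Cnorm2_RtoC in Hb. lra. }
  apply (Cmul_cancel (RtoC P * b)).
  { intro E. destruct (Cmul_integral _ _ E) as [E1|E1]. exact (RtoC_neq P ltac:(lra) E1). exact (Hb0 E1). }
  unfold lam. simpl sgn.
  set (kp := (c + 1 * D) / (P * n)). set (km := (c + -1 * D) / (P * n)).
  assert (E1 : (RtoC P * (RtoC kp + RtoC km) * RtoC n = RtoC (2 * c))%C).
  { rewrite <- RtoC_plus, <- !RtoC_mult. f_equal. unfold kp, km. field. lra. }
  assert (E2 : (RtoC P * RtoC kp * RtoC km * RtoC n = RtoC (- M))%C).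
  { rewrite <- !RtoC_mult. f_equal. unfold kp, km.
    replace (P * ((c + 1 * D) / (P * n)) * ((c + -1 * D) / (P * n)) * n)
      with (((c + D) * (c - D)) / (P * n)) by (field; lra).
    replace ((c + D) * (c - D)) with (- (P * M * n)) by nra. field. lra. }
  transitivity (RtoC P * (RtoC kp + RtoC km) * (b * Complex.Cconj b) * h (S k)
     - RtoC P * RtoC kp * RtoC km * (b * Complex.Cconj b) * Complex.Cconj b * h k)%C.
  2: ring.
  rewrite conj_mul_self, Hb, E1.
  replace (RtoC P * RtoC kp * RtoC km * RtoC n)%C with (RtoC (- M)) by (rewrite <- E2; ring).
  specialize (Hrec k).
  rewrite RtoC_opp. apply Csub0. rewrite <- Hrec. ring.
Qed.

Lemma lam_norm P n c D b sg : Cnorm2 b = n ->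
  Cnorm2 (lam P n c D b sg) = ((c + sgn sg * D) / (P * n)) * ((c + sgn sg * D) / (P * n)) * n.
Proof. intro H. unfold lam. rewrite Cnorm2_mul, Cnorm2_RtoC, Cnorm2_conj, H. ring. Qed.

Lemma lam_mul P n c D b sg : Cnorm2 b = n -> 0 < P -> 0 < n ->
  (RtoC P * (b * lam P n c D b sg))%C = RtoC (c + sgn sg * D).
Proof. intros H HP Hn. unfold lam.
  transitivity (RtoC P * RtoC ((c + sgn sg * D) / (P * n)) * (b * Complex.Cconj b))%C. ring.
  rewrite conj_mul_self, H, <- !RtoC_mult. f_equal. field. lra. Qed.

Lemma m2iq_form s p q a1 a2 b psi x :
  minus2iQ s p q a1 a2 b psi x =
  (RtoC (1 + sgn s * p) * (expiArg q * b (x+1)%Z * psi (x+1)%Z)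
   - RtoC (1 - sgn s * p) * (Complex.Cconj (expiArg q * b x) * psi (x-1)%Z)
   + RtoC (sgn s * Cabs q * (a2 (x+1)%Z - a1 x)) * psi x)%C.
Proof.
  unfold minus2iQ. rewrite Cconj_mul.
  change Defs.Cadd with Cplus; change Defs.Cmul with Cmult; change Defs.Copp with Complex.Copp;
  change Defs.Cconj with Complex.Cconj; change CR with RtoC.
  match goal with |- ?a = ?b => change (@eq Complex.C a b) end. ring.
Qed.

Lemma Qeps_zero s p q a1 a2 b psi x :
  Qeps s p q a1 a2 b psi x = C0 <-> minus2iQ s p q a1 a2 b psi x = RtoC 0.
Proof.
  unfold Qeps. change Defs.Cmul with Cmult. rewrite C0_eq. split; intro H.
  - destruct (Cmul_integral _ _ H) as [E|E]; auto. injection E; intros. exfalso.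
    assert (/ 2 <> 0) by (apply Rinv_neq_0_compat; lra). auto.
  - rewrite H. toC. ring.
Qed.


Definition mk (u v : nat -> Complex.C) : state :=
  fun x => if (0 <=? x)%Z then u (Z.to_nat x) else v (Z.to_nat (- x)).

Lemma fR_mk u v k : fR (mk u v) k = u k.
Proof. unfold fR, mk. destruct (Z.leb_spec 0 (Z.of_nat k)); [|lia]. rewrite Nat2Z.id; auto. Qed.

Lemma gL_mk u v k : u 0%nat = v 0%nat -> gL (mk u v) k = v k.
Proof. intro H. unfold gL, mk. destruct k.
  - simpl. auto.
  - destruct (Z.leb_spec 0 (- Z.of_nat (S k))); [lia|].
    rewrite Z.opp_involutive, Nat2Z.id; auto. Qed.

Lemma ext_mk (psi : state) (c : Complex.C) u v :
  (forall k, fR psi k = (c * u k)%C) -> (forall k, gL psi k = (c * v k)%C) ->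
  forall x, psi x = (c * mk u v x)%C.
Proof.
  intros Hf Hg x. unfold mk. destruct (Z.leb_spec 0 x).
  - rewrite <- Hf. unfold fR. f_equal. lia.
  - rewrite <- Hg. unfold gL. f_equal. lia.
Qed.

Lemma mk_l2 (l m : Complex.C) : Cnorm2 l < 1 -> Cnorm2 m < 1 ->
  in_l2 (mk (cpow l) (cpow m)).
Proof.
  intros Hl Hm. apply (l2_suff _ (Rmax (Cnorm2 l) (Cnorm2 m)) 1).
  - split. pose proof (Cnorm2_ge0 l). pose proof (Rmax_l (Cnorm2 l) (Cnorm2 m)). lra.
    apply Rmax_lub_lt; auto.
  - lra.
  - intro n. rewrite fR_mk, Cnorm2_cpow. rewrite Rmult_1_l. apply pow_incr.
    split. apply Cnorm2_ge0. apply Rmax_l.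
  - intro n. rewrite gL_mk by reflexivity. rewrite Cnorm2_cpow. rewrite Rmult_1_l. apply pow_incr.
    split. apply Cnorm2_ge0. apply Rmax_r.
Qed.

Lemma lam_root P M n c D b sg : 0 < P -> 0 < n -> Cnorm2 b = n ->
  D * D = c * c + P * M * n ->
  forall k, (RtoC P * (b * cpow (lam P n c D b sg) (S (S k)))
     - RtoC M * (Complex.Cconj b * cpow (lam P n c D b sg) k)
     - RtoC (2 * c) * cpow (lam P n c D b sg) (S k) = RtoC 0)%C.
Proof.
  intros HP Hn Hb HD k. pose proof (lam_mul P n c D b sg Hb HP Hn) as Hm.
  set (l := lam P n c D b sg) in *. simpl cpow.
  transitivity (cpow l k * ((RtoC P * (b * l)) * l - RtoC M * Complex.Cconj b - RtoC (2 * c) * l))%C.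
  ring. rewrite Hm.
  assert (Hs : sgn sg * sgn sg = 1) by (destruct sg; simpl; ring).
  assert (E : (RtoC (c + sgn sg * D) * l - RtoC (2 * c) * l = RtoC M * Complex.Cconj b)%C).
  { unfold l, lam.
    transitivity (RtoC ((c + sgn sg * D - 2 * c) * ((c + sgn sg * D) / (P * n))) * Complex.Cconj b)%C.
    rewrite (RtoC_mult (c + sgn sg * D - 2 * c)), (RtoC_minus (c + sgn sg * D)). ring. f_equal. f_equal.
    replace (c + sgn sg * D - 2 * c) with (sgn sg * D - c) by ring.
    replace ((sgn sg * D - c) * ((c + sgn sg * D) / (P * n)))
      with ((sgn sg * sgn sg * (D * D) - c * c) / (P * n)) by (field; lra).
    rewrite Hs, HD. field. lra. }
  transitivity (cpow l k * ((RtoC (c + sgn sg * D) * l - RtoC (2 * c) * l) - RtoC M * Complex.Cconj b))%C.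
  ring. rewrite E. ring.
Qed.

Definition PP s p := 1 + sgn s * p.
Definition MM s p := 1 - sgn s * p.
Definition bet q z := (expiArg q * z)%C.
Definition QQ q := Cabs q.

Definition EqR s p q aR bR psi k :=
  (RtoC (PP s p) * (bet q bR * fR psi (S (S k))) - RtoC (MM s p) * (Complex.Cconj (bet q bR) * fR psi k)
   - RtoC (2 * (sgn s * QQ q * aR)) * fR psi (S k))%C.
Definition EqL s p q aL bL psi k :=
  (RtoC (MM s p) * (Complex.Cconj (bet q bL) * gL psi (S (S k)))
   - RtoC (PP s p) * (Complex.Cconj (Complex.Cconj (bet q bL)) * gL psi k)
   - RtoC (2 * (- (sgn s * QQ q * aL))) * gL psi (S k))%C.
Definition Eq0 s p q aL aR bL bR psi :=
  (RtoC (PP s p) * (bet q bR * fR psi 1) - RtoC (MM s p) * (Complex.Cconj (bet q bL) * gL psi 1)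
   - RtoC (sgn s * QQ q * (aR + aL)) * fR psi 0)%C.

Lemma kernel_iff s p q a1 a2 b aL aR bL bR psi
  (HxR : forall x, (1 <= x)%Z -> a1 x = aR /\ a2 x = - aR /\ b x = bR)
  (HxL : forall x, (x <= 0)%Z -> a1 x = aL /\ a2 x = - aL /\ b x = bL) :
  in_kernel (Qeps s p q a1 a2 b) psi <->
  in_l2 psi /\ (forall k, EqR s p q aR bR psi k = RtoC 0) /\
  (forall k, EqL s p q aL bL psi k = RtoC 0) /\ Eq0 s p q aL aR bL bR psi = RtoC 0.
Proof.
  assert (ER : forall k, minus2iQ s p q a1 a2 b psi (Z.of_nat (S k)) = EqR s p q aR bR psi k).
  { intro k. rewrite m2iq_form.
    destruct (HxR (Z.of_nat (S k) + 1)%Z ltac:(lia)) as [_ [E2 E3]].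
    destruct (HxR (Z.of_nat (S k)) ltac:(lia)) as [E4 [_ E6]].
    rewrite E2, E3, E4, E6. unfold EqR, fR, bet, PP, MM, QQ.
    replace (Z.of_nat (S k) + 1)%Z with (Z.of_nat (S (S k))) by lia.
    replace (Z.of_nat (S k) - 1)%Z with (Z.of_nat k) by lia.
    replace (sgn s * Cabs q * (- aR - aR)) with (- (2 * (sgn s * Cabs q * aR))) by ring.
    rewrite RtoC_opp. toC. ring. }
  assert (EL : forall k, minus2iQ s p q a1 a2 b psi (- Z.of_nat (S k))%Z = (- EqL s p q aL bL psi k)%C).
  { intro k. rewrite m2iq_form.
    destruct (HxL (- Z.of_nat (S k) + 1)%Z ltac:(lia)) as [_ [E2 E3]].
    destruct (HxL (- Z.of_nat (S k))%Z ltac:(lia)) as [E4 [_ E6]].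
    rewrite E2, E3, E4, E6. unfold EqL, gL, bet, PP, MM, QQ. rewrite Cconj_inv.
    replace (- Z.of_nat (S k) + 1)%Z with (- Z.of_nat k)%Z by lia.
    replace (- Z.of_nat (S k) - 1)%Z with (- Z.of_nat (S (S k)))%Z by lia.
    replace (sgn s * Cabs q * (- aL - aL)) with (- (2 * (sgn s * Cabs q * aL))) by ring.
    replace (2 * - (sgn s * Cabs q * aL)) with (- (2 * (sgn s * Cabs q * aL))) by ring.
    rewrite !RtoC_opp. toC. ring. }
  assert (E0 : minus2iQ s p q a1 a2 b psi 0%Z = Eq0 s p q aL aR bL bR psi).
  { rewrite m2iq_form.
    destruct (HxR 1%Z ltac:(lia)) as [_ [E2 E3]].
    destruct (HxL 0%Z ltac:(lia)) as [E4 [_ E6]].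
    simpl (0 + 1)%Z. simpl (0 - 1)%Z.
    rewrite E2, E3, E4, E6. unfold Eq0, gL, fR, bet, PP, MM, QQ. simpl Z.of_nat.
    replace (sgn s * Cabs q * (- aR - aL)) with (- (sgn s * Cabs q * (aR + aL))) by ring.
    change (- (1))%Z with (-1)%Z. rewrite RtoC_opp. toC. ring. }
  unfold in_kernel. split.
  - intros [Hl Hq]. split; [auto|]. split; [|split].
    + intro k. rewrite <- ER. apply Qeps_zero. apply Hq.
    + intro k. specialize (Hq (- Z.of_nat (S k))%Z). apply Qeps_zero in Hq. rewrite EL in Hq.
      replace (EqL s p q aL bL psi k) with (- - EqL s p q aL bL psi k)%C by ring.
      rewrite Hq. ring.
    + rewrite <- E0. apply Qeps_zero. apply Hq.
  - intros [Hl [HR [HL H0]]]. split; auto. intro x. apply Qeps_zero.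
    destruct (Z.lt_trichotomy x 0) as [Hx|[Hx|Hx]].
    + replace x with (- Z.of_nat (S (Z.to_nat (- x) - 1)))%Z by lia.
      rewrite EL, HL. toC. ring.
    + subst x. rewrite E0; auto.
    + replace x with (Z.of_nat (S (Z.to_nat x - 1))) by lia. rewrite ER; auto.
Qed.
Lemma ratio_lt (P M Q t a tp ss : R) : P = 1 + tp -> M = 1 - tp -> -1 < tp < 1 ->
  Q * Q = 1 - tp * tp -> t * t = 1 -> ss * ss = 1 -> 0 < 1 - a * a ->
  (((t * Q * a + ss * Q) / (P * (1 - a * a))) * ((t * Q * a + ss * Q) / (P * (1 - a * a))) * (1 - a * a) < 1
   <-> ss * t * a < tp).
Proof.
  intros HP HM Htp HQ Ht Hs Ha.
  set (y := ss * t * a).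
  assert (Hy2 : y * y = a * a) by (unfold y; replace (ss * t * a * (ss * t * a)) with ((ss*ss)*(t*t)*(a*a)) by ring; rewrite Hs, Ht; ring).
  assert (Hy : -1 < y < 1) by nra.
  assert (E1 : t * Q * a + ss * Q = ss * Q * (1 + y)) by (unfold y; replace (ss * Q * (1 + ss * t * a)) with (ss * Q + (ss*ss) * t * Q * a) by ring; rewrite Hs; ring).
  assert (E2 : 1 - a * a = (1 - y) * (1 + y)) by nra.
  rewrite E1, E2.
  assert (HP0 : 0 < P) by lra.
  replace ((ss * Q * (1 + y) / (P * ((1 - y) * (1 + y)))) * (ss * Q * (1 + y) / (P * ((1 - y) * (1 + y)))) * ((1 - y) * (1 + y)))
    with ((ss * ss) * (Q * Q) * (1 + y) / (P * P * (1 - y))) by (field; lra).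
  rewrite Hs, HQ.
  replace (1 * (1 - tp * tp) * (1 + y) / (P * P * (1 - y))) with ((1 - tp) * (1 + y) / (P * (1 - y))) by (subst P; field; lra).
  assert (HD : 0 < P * (1 - y)) by nra.
  split; intro H.
  - apply (Rmult_lt_compat_r (P * (1 - y))) in H; auto.
    unfold Rdiv in H. rewrite Rmult_assoc, Rinv_l in H by lra. nra.
  - apply (Rmult_lt_reg_r (P * (1 - y))); auto. unfold Rdiv. rewrite Rmult_assoc, Rinv_l by lra. nra.
Qed.

Definition Kp (P M Q t aR aL : R) (bR bL : Complex.C) (psi : state) : Prop :=
  in_l2 psi /\
  (forall k, (RtoC P * (bR * fR psi (S (S k))) - RtoC M * (Complex.Cconj bR * fR psi k)
              - RtoC (2 * (t * Q * aR)) * fR psi (S k))%C = RtoC 0) /\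
  (forall k, (RtoC M * (bL * gL psi (S (S k))) - RtoC P * (Complex.Cconj bL * gL psi k)
              - RtoC (2 * (- (t * Q * aL))) * gL psi (S k))%C = RtoC 0) /\
  (RtoC P * (bR * fR psi 1) - RtoC M * (bL * gL psi 1)
   - RtoC (t * Q * (aR + aL)) * fR psi 0)%C = RtoC 0.

Definition HypS (P M Q t tp : R) :=
  P = 1 + tp /\ M = 1 - tp /\ -1 < tp < 1 /\ 0 < Q /\ Q * Q = 1 - tp * tp /\ t * t = 1.

Definition lamR P Q t aR bR sg := lam P (1 - aR * aR) (t * Q * aR) Q bR sg.
Definition lamL M Q t aL bL sg := lam M (1 - aL * aL) (- (t * Q * aL)) Q bL sg.

Lemma sgn2 sg : sgn sg * sgn sg = 1.
Proof. destruct sg; simpl; ring. Qed.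

Lemma DR P M Q t tp a : HypS P M Q t tp -> Q * Q = (t * Q * a) * (t * Q * a) + P * M * (1 - a * a).
Proof. intros (HP & HM & Htp & HQ & HQ2 & Ht).
  replace ((t * Q * a) * (t * Q * a)) with ((t * t) * (Q * Q) * (a * a)) by ring.
  rewrite Ht, HP, HM, HQ2. ring. Qed.
Lemma DL P M Q t tp a : HypS P M Q t tp -> Q * Q = (- (t * Q * a)) * (- (t * Q * a)) + M * P * (1 - a * a).
Proof. intros H. rewrite (DR P M Q t tp a H) at 1. ring. Qed.

Lemma goodR_iff P M Q t tp aR bR sg : HypS P M Q t tp -> 0 < 1 - aR * aR ->
  Cnorm2 bR = 1 - aR * aR ->
  (Cnorm2 (lamR P Q t aR bR sg) < 1 <-> sgn sg * t * aR < tp).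
Proof. intros (HP & HM & Htp & HQ & HQ2 & Ht) Ha Hb. unfold lamR. rewrite lam_norm by auto.
  apply (ratio_lt P M Q t aR tp (sgn sg)); auto. apply sgn2. Qed.

Lemma goodL_iff P M Q t tp aL bL sg : HypS P M Q t tp -> 0 < 1 - aL * aL ->
  Cnorm2 bL = 1 - aL * aL ->
  (Cnorm2 (lamL M Q t aL bL sg) < 1 <-> tp < sgn sg * t * aL).
Proof. intros (HP & HM & Htp & HQ & HQ2 & Ht) Ha Hb. unfold lamL. rewrite lam_norm by auto.
  replace (- (t * Q * aL)) with ((- t) * Q * aL) by ring.
  pose proof (ratio_lt M P Q (- t) aL (- tp) (sgn sg) ltac:(lra) ltac:(lra) ltac:(lra)
    ltac:(nra) ltac:(nra) (sgn2 sg) Ha) as Hr.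
  rewrite Hr. split; intro; nra. Qed.

Lemma rec_sw (h : nat -> Complex.C) a b :
  (forall k, h (S (S k)) = ((a + b) * h (S k) - a * b * h k)%C) ->
  (forall k, h (S (S k)) = ((b + a) * h (S k) - b * a * h k)%C).
Proof. intros H k. rewrite H. ring. Qed.

Lemma recR P M Q t tp aR aL bR bL psi : HypS P M Q t tp -> 0 < 1 - aR * aR ->
  Cnorm2 bR = 1 - aR * aR -> Kp P M Q t aR aL bR bL psi -> forall sg,
  forall k, fR psi (S (S k)) = ((lamR P Q t aR bR sg + lamR P Q t aR bR (negb sg)) * fR psi (S k)
      - lamR P Q t aR bR sg * lamR P Q t aR bR (negb sg) * fR psi k)%C.
Proof.
  intros HS Ha Hb (Hl & HR & HL & H0) sg.
  assert (Hr := side_rec P M (1 - aR * aR) (t * Q * aR) Q bR (fR psi)).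
  destruct HS as (HP & HM & Htp & HQ & HQ2 & Ht) eqn:HS'.
  specialize (Hr ltac:(lra) Ha Hb (DR P M Q t tp aR HS) HR).
  destruct sg; simpl negb; [exact Hr| apply rec_sw; exact Hr].
Qed.

Lemma recL P M Q t tp aR aL bR bL psi : HypS P M Q t tp -> 0 < 1 - aL * aL ->
  Cnorm2 bL = 1 - aL * aL -> Kp P M Q t aR aL bR bL psi -> forall sg,
  forall k, gL psi (S (S k)) = ((lamL M Q t aL bL sg + lamL M Q t aL bL (negb sg)) * gL psi (S k)
      - lamL M Q t aL bL sg * lamL M Q t aL bL (negb sg) * gL psi k)%C.
Proof.
  intros HS Ha Hb (Hl & HR & HL & H0) sg.
  assert (Hr := side_rec M P (1 - aL * aL) (- (t * Q * aL)) Q bL (gL psi)).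
  destruct HS as (HP & HM & Htp & HQ & HQ2 & Ht) eqn:HS'.
  specialize (Hr ltac:(lra) Ha Hb (DL P M Q t tp aL HS) HL).
  destruct sg; simpl negb; [exact Hr| apply rec_sw; exact Hr].
Qed.

Lemma Cmove a b c : (a - b - c = RtoC 0)%C -> b = (a - c)%C.
Proof. intro H. apply Csub0. replace (b - (a - c))%C with (- (a - b - c))%C by ring. rewrite H. ring. Qed.

Lemma gL0 psi : gL psi 0 = fR psi 0.
Proof. reflexivity. Qed.

Lemma III_core P M Q t tp aR aL bR bL psi sg : HypS P M Q t tp ->
  0 < 1 - aR * aR -> Cnorm2 bR = 1 - aR * aR ->
  0 < 1 - aL * aL -> Cnorm2 bL = 1 - aL * aL ->
  Kp P M Q t aR aL bR bL psi ->
  (1 <= Cnorm2 (lamR P Q t aR bR sg) \/ 1 <= Cnorm2 (lamL M Q t aL bL sg)) ->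
  forall x, psi x = (fR psi 0 * mk (cpow (lamR P Q t aR bR (negb sg))) (cpow (lamL M Q t aL bL (negb sg))) x)%C.
Proof.
  intros HS HaR HbR HaL HbL HK Hbad.
  pose proof (recR _ _ _ _ _ _ _ _ _ _ HS HaR HbR HK sg) as RR.
  pose proof (recL _ _ _ _ _ _ _ _ _ _ HS HaL HbL HK sg) as RL.
  pose proof (recR _ _ _ _ _ _ _ _ _ _ HS HaR HbR HK (negb sg)) as RR'.
  pose proof (recL _ _ _ _ _ _ _ _ _ _ HS HaL HbL HK (negb sg)) as RL'.
  rewrite Bool.negb_involutive in RR', RL'.
  destruct HK as (Hl & HR & HL & H0).
  destruct (l2_decay psi Hl) as [Df Dg].
  destruct HS as (HP & HM & Htp & HQ & HQ2 & Ht) eqn:HS'.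
  set (lr := lamR P Q t aR bR (negb sg)). set (ll := lamL M Q t aL bL (negb sg)).
  assert (MR : (RtoC P * (bR * lr))%C = RtoC (t * Q * aR + sgn (negb sg) * Q)).
  { apply lam_mul; auto; lra. }
  assert (ML : (RtoC M * (bL * ll))%C = RtoC (- (t * Q * aL) + sgn (negb sg) * Q)).
  { apply lam_mul; auto; lra. }
  assert (HbR0 : (RtoC P * bR)%C <> RtoC 0).
  { intro E. destruct (Cmul_integral _ _ E) as [E1|E1].
    apply (RtoC_neq P); auto; lra. subst bR. rewrite Cnorm2_RtoC in HbR. lra. }
  assert (HbL0 : (RtoC M * bL)%C <> RtoC 0).
  { intro E. destruct (Cmul_integral _ _ E) as [E1|E1].
    apply (RtoC_neq M); auto; lra. subst bL. rewrite Cnorm2_RtoC in HbL. lra. }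
  assert (Hreal : t * Q * aR + sgn (negb sg) * Q - t * Q * (aR + aL) = - (t * Q * aL) + sgn (negb sg) * Q) by ring.
  apply Cmove in H0.
  assert (F : fR psi 1 = (lr * fR psi 0)%C /\ gL psi 1 = (ll * gL psi 0)%C).
  { destruct Hbad as [B|B].
    - assert (E1 : fR psi 1 = (lr * fR psi 0)%C).
      { apply Csub0. apply (decay_zero (fR psi) (lamR P Q t aR bR sg) lr); auto.
        apply rec_vtrick. exact RR. }
      split; auto. apply (Cmul_cancel (RtoC M * bL)); auto.
      transitivity (RtoC M * (bL * gL psi 1))%C. ring. rewrite H0, E1.
      transitivity ((RtoC P * (bR * lr)) * fR psi 0 - RtoC (t * Q * (aR + aL)) * fR psi 0)%C. ring.
      rewrite MR, gL0. transitivity ((RtoC M * (bL * ll)) * fR psi 0)%C. 2: ring.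
      rewrite ML, <- Hreal, RtoC_minus. ring.
    - assert (E1 : gL psi 1 = (ll * gL psi 0)%C).
      { apply Csub0. apply (decay_zero (gL psi) (lamL M Q t aL bL sg) ll); auto.
        apply rec_vtrick. exact RL. }
      split; auto. apply (Cmul_cancel (RtoC P * bR)); auto.
      transitivity (RtoC P * (bR * fR psi 1))%C. ring.
      replace (RtoC P * (bR * fR psi 1))%C with (RtoC M * (bL * gL psi 1) + RtoC (t * Q * (aR + aL)) * fR psi 0)%C
        by (rewrite H0; ring).
      rewrite E1, gL0.
      transitivity ((RtoC M * (bL * ll)) * fR psi 0 + RtoC (t * Q * (aR + aL)) * fR psi 0)%C. ring.
      rewrite ML. transitivity ((RtoC P * (bR * lr)) * fR psi 0)%C. 2: ring. rewrite MR.
      replace (t * Q * aR + sgn (negb sg) * Q) with ((- (t * Q * aL) + sgn (negb sg) * Q) + t * Q * (aR + aL)) by ring.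
      rewrite (RtoC_plus (- (t * Q * aL) + sgn (negb sg) * Q)). ring. }
  destruct F as [F1 F2]. unfold lr, ll in *.
  apply ext_mk.
  - intro k. rewrite (rec_geom (fR psi) _ _ RR F1 k). toC. ring.
  - intro k. rewrite (rec_geom (gL psi) _ _ RL F2 k), gL0. toC. ring.
Qed.

Definition dim0 (K : state -> Prop) := forall psi, K psi -> forall x, psi x = C0.
Definition dim1 (K : state -> Prop) := exists e, K e /\ (exists x, e x <> C0) /\
  forall psi, K psi -> exists c, forall x, psi x = (c * e x)%C.

Lemma mk0 u v : mk u v 0%Z = u 0%nat.
Proof. reflexivity. Qed.
Lemma mk1 u v : mk u v 1%Z = u 1%nat.
Proof. reflexivity. Qed.

Lemma III_good P M Q t tp aR aL bR bL sg : HypS P M Q t tp ->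
  0 < 1 - aR * aR -> Cnorm2 bR = 1 - aR * aR ->
  0 < 1 - aL * aL -> Cnorm2 bL = 1 - aL * aL ->
  Cnorm2 (lamR P Q t aR bR sg) < 1 -> Cnorm2 (lamL M Q t aL bL sg) < 1 ->
  dim1 (Kp P M Q t aR aL bR bL).
Proof.
  intros HS HaR HbR HaL HbL G1 G2.
  exists (mk (cpow (lamR P Q t aR bR sg)) (cpow (lamL M Q t aL bL sg))).
  destruct HS as (HP & HM & Htp & HQ & HQ2 & Ht) eqn:HS'.
  split; [|split].
  - split; [|split; [|split]].
    + apply mk_l2; auto.
    + intro k. rewrite !fR_mk. unfold lamR. apply lam_root; auto. lra. apply (DR P M Q t tp aR HS).
    + intro k. rewrite !gL_mk by reflexivity. unfold lamL. apply lam_root; auto. lra.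
      apply (DL P M Q t tp aL HS).
    + rewrite !fR_mk, gL_mk by reflexivity. simpl cpow.
      transitivity (RtoC P * (bR * lamR P Q t aR bR sg) - RtoC M * (bL * lamL M Q t aL bL sg)
         - RtoC (t * Q * (aR + aL)))%C. ring.
      unfold lamR, lamL. rewrite !lam_mul by (auto; lra).
      rewrite <- !RtoC_minus. f_equal. ring.
  - exists 0%Z. rewrite mk0. simpl. intro E. injection E. lra.
  - intros psi Hpsi. exists (fR psi 0).
    assert (Hb : 1 <= Cnorm2 (lamR P Q t aR bR (negb sg)) \/ 1 <= Cnorm2 (lamL M Q t aL bL (negb sg))).
    { destruct (Rlt_le_dec (Cnorm2 (lamR P Q t aR bR (negb sg))) 1) as [A|A]; [|left; auto].
      destruct (Rlt_le_dec (Cnorm2 (lamL M Q t aL bL (negb sg))) 1) as [B|B]; [|right; auto].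
      exfalso. apply (goodR_iff P M Q t tp aR bR _ HS HaR HbR) in A, G1.
      apply (goodL_iff P M Q t tp aL bL _ HS HaL HbL) in B, G2.
      destruct sg; simpl in *; lra. }
    intro x. rewrite (III_core P M Q t tp aR aL bR bL psi (negb sg) HS HaR HbR HaL HbL Hpsi Hb x).
    rewrite Bool.negb_involutive. reflexivity.
Qed.

Lemma III_none P M Q t tp aR aL bR bL : HypS P M Q t tp ->
  0 < 1 - aR * aR -> Cnorm2 bR = 1 - aR * aR ->
  0 < 1 - aL * aL -> Cnorm2 bL = 1 - aL * aL ->
  (forall sg, ~ (Cnorm2 (lamR P Q t aR bR sg) < 1 /\ Cnorm2 (lamL M Q t aL bL sg) < 1)) ->
  dim0 (Kp P M Q t aR aL bR bL).
Proof.
  intros HS HaR HbR HaL HbL G psi Hpsi.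
  assert (Hbad : forall sg, 1 <= Cnorm2 (lamR P Q t aR bR sg) \/ 1 <= Cnorm2 (lamL M Q t aL bL sg)).
  { intro sg. destruct (Rlt_le_dec (Cnorm2 (lamR P Q t aR bR sg)) 1) as [A|A]; [|left; auto].
    destruct (Rlt_le_dec (Cnorm2 (lamL M Q t aL bL sg)) 1) as [B|B]; [|right; auto].
    exfalso; apply (G sg); auto. }
  pose proof (III_core P M Q t tp aR aL bR bL psi true HS HaR HbR HaL HbL Hpsi (Hbad true)) as E1.
  pose proof (III_core P M Q t tp aR aL bR bL psi false HS HaR HbR HaL HbL Hpsi (Hbad false)) as E2.
  simpl negb in E1, E2.
  destruct HS as (HP & HM & Htp & HQ & HQ2 & Ht) eqn:HS'.
  assert (Z0 : fR psi 0 = RtoC 0).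
  { pose proof (E1 1%Z) as A. rewrite (E2 1%Z), !mk1 in A. simpl cpow in A.
    assert (B : (RtoC P * bR * (fR psi 0 * (lamR P Q t aR bR true - lamR P Q t aR bR false)))%C = RtoC 0).
    { transitivity (RtoC P * bR * (fR psi 0 * (lamR P Q t aR bR true * RtoC 1)) - RtoC P * bR * (fR psi 0 * (lamR P Q t aR bR false * RtoC 1)))%C.
      ring. toC. rewrite <- A. ring. }
    assert (C1 : (RtoC P * bR * (lamR P Q t aR bR true - lamR P Q t aR bR false))%C = RtoC (2 * Q)).
    { transitivity (RtoC P * (bR * lamR P Q t aR bR true) - RtoC P * (bR * lamR P Q t aR bR false))%C.
      ring. unfold lamR. rewrite !lam_mul by (auto; lra). rewrite <- RtoC_minus. f_equal. simpl; ring. }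
    replace (RtoC P * bR * (fR psi 0 * (lamR P Q t aR bR true - lamR P Q t aR bR false)))%C
      with (RtoC (2 * Q) * fR psi 0)%C in B by (rewrite <- C1; ring).
    destruct (Cmul_integral _ _ B) as [D|D]; auto. exfalso. apply (RtoC_neq (2 * Q)); auto. lra. }
  intro x. rewrite (E1 x), Z0. rewrite C0_eq. toC. ring.
Qed.

Lemma nz3 t Q a : 0 < Q -> t * t = 1 -> a * a = 1 -> t * Q * a <> 0.
Proof. intros HQ Ht Ha Z.
  assert (E : t * a * (t * Q * a) = Q * ((t * t) * (a * a))) by ring.
  rewrite Z, Ht, Ha in E. lra. Qed.

Lemma zero_side_R P M Q t aR aL bL psi : 0 < Q -> t * t = 1 -> aR * aR = 1 -> 
  Kp P M Q t aR aL (RtoC 0) bL psi -> forall k, fR psi (S k) = RtoC 0.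
Proof.
  intros HQ Ht Ha (Hl & HR & HL & H0) k. specialize (HR k).
  rewrite Cconj_RtoC in HR.
  assert (E : (RtoC (2 * (t * Q * aR)) * fR psi (S k))%C = RtoC 0).
  { transitivity (- (RtoC P * (RtoC 0 * fR psi (S (S k))) - RtoC M * (RtoC 0 * fR psi k)
      - RtoC (2 * (t * Q * aR)) * fR psi (S k)))%C. ring. rewrite HR. ring. }
  destruct (Cmul_integral _ _ E) as [D|D]; auto. exfalso.
  apply (RtoC_neq (2 * (t * Q * aR))); auto. pose proof (nz3 t Q aR HQ Ht Ha). lra.
Qed.

Lemma zero_side_L P M Q t aR aL bR psi : 0 < Q -> t * t = 1 -> aL * aL = 1 ->
  Kp P M Q t aR aL bR (RtoC 0) psi -> forall k, gL psi (S k) = RtoC 0.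
Proof.
  intros HQ Ht Ha (Hl & HR & HL & H0) k. specialize (HL k).
  rewrite Cconj_RtoC in HL.
  assert (E : (RtoC (2 * (- (t * Q * aL))) * gL psi (S k))%C = RtoC 0).
  { transitivity (- (RtoC M * (RtoC 0 * gL psi (S (S k))) - RtoC P * (RtoC 0 * gL psi k)
      - RtoC (2 * (- (t * Q * aL))) * gL psi (S k)))%C. ring. rewrite HL. ring. }
  destruct (Cmul_integral _ _ E) as [D|D]; auto. exfalso.
  apply (RtoC_neq (2 * (- (t * Q * aL)))); auto. pose proof (nz3 t Q aL HQ Ht Ha). lra.
Qed.

Lemma II_shape P M Q t tp aR aL bR psi sg : HypS P M Q t tp ->
  0 < 1 - aR * aR -> Cnorm2 bR = 1 - aR * aR -> aL * aL = 1 -> sgn sg = t * aL ->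
  Kp P M Q t aR aL bR (RtoC 0) psi ->
  forall x, psi x = (fR psi 0 * mk (cpow (lamR P Q t aR bR sg)) (cpow (RtoC 0)) x)%C.
Proof.
  intros HS HaR HbR HaL Hsg HK.
  pose proof (recR _ _ _ _ _ _ _ _ _ _ HS HaR HbR HK (negb sg)) as RR.
  rewrite Bool.negb_involutive in RR.
  destruct HS as (HP & HM & Htp & HQ & HQ2 & Ht) eqn:HS'.
  pose proof (zero_side_L _ _ _ _ _ _ _ _ HQ Ht HaL HK) as ZL.
  destruct HK as (Hl & HR & HL & H0).
  assert (MR : (RtoC P * (bR * lamR P Q t aR bR sg))%C = RtoC (t * Q * aR + sgn sg * Q)).
  { apply lam_mul; auto; lra. }
  assert (HbR0 : (RtoC P * bR)%C <> RtoC 0).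
  { intro E. destruct (Cmul_integral _ _ E) as [E1|E1].
    apply (RtoC_neq P); auto; lra. subst bR. rewrite Cnorm2_RtoC in HbR. lra. }
  assert (F1 : fR psi 1 = (lamR P Q t aR bR sg * fR psi 0)%C).
  { apply (Cmul_cancel (RtoC P * bR)); auto.
    apply Cmove in H0.
    transitivity (RtoC P * (bR * fR psi 1))%C. ring.
    replace (RtoC P * (bR * fR psi 1))%C with
      (RtoC M * (RtoC 0 * gL psi 1) + RtoC (t * Q * (aR + aL)) * fR psi 0)%C by (rewrite H0; ring).
    transitivity ((RtoC P * (bR * lamR P Q t aR bR sg)) * fR psi 0)%C. 2: ring.
    rewrite MR. replace (t * Q * aR + sgn sg * Q) with (t * Q * (aR + aL)) by (rewrite Hsg; ring). ring. }
  apply ext_mk.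
  - intro k. rewrite (rec_geom (fR psi) _ _ RR F1 k). toC. ring.
  - intro k. destruct k. rewrite gL0. simpl. ring. rewrite ZL. simpl. ring.
Qed.

Lemma II_good P M Q t tp aR aL bR sg : HypS P M Q t tp ->
  0 < 1 - aR * aR -> Cnorm2 bR = 1 - aR * aR -> aL * aL = 1 -> sgn sg = t * aL ->
  Cnorm2 (lamR P Q t aR bR sg) < 1 -> dim1 (Kp P M Q t aR aL bR (RtoC 0)).
Proof.
  intros HS HaR HbR HaL Hsg G.
  exists (mk (cpow (lamR P Q t aR bR sg)) (cpow (RtoC 0))).
  destruct HS as (HP & HM & Htp & HQ & HQ2 & Ht) eqn:HS'.
  split; [|split].
  - split; [|split; [|split]].
    + apply mk_l2; auto. rewrite Cnorm2_RtoC. lra.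
    + intro k. rewrite !fR_mk. unfold lamR. apply lam_root; auto. lra. apply (DR P M Q t tp aR HS).
    + intro k. rewrite !gL_mk by reflexivity. rewrite Cconj_RtoC. rewrite !cpow_0n. ring.
    + rewrite !fR_mk, gL_mk by reflexivity. simpl cpow.
      transitivity (RtoC P * (bR * lamR P Q t aR bR sg) - RtoC (t * Q * (aR + aL)))%C. ring.
      unfold lamR. rewrite !lam_mul by (auto; lra).
      rewrite <- !RtoC_minus. f_equal. rewrite Hsg. ring.
  - exists 0%Z. rewrite mk0. simpl. intro E. injection E. lra.
  - intros psi Hpsi. exists (fR psi 0). apply (II_shape P M Q t tp aR aL bR psi sg HS); auto.
Qed.

Lemma II_bad P M Q t tp aR aL bR sg : HypS P M Q t tp ->
  0 < 1 - aR * aR -> Cnorm2 bR = 1 - aR * aR -> aL * aL = 1 -> sgn sg = t * aL ->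
  1 <= Cnorm2 (lamR P Q t aR bR sg) -> dim0 (Kp P M Q t aR aL bR (RtoC 0)).
Proof.
  intros HS HaR HbR HaL Hsg G psi Hpsi.
  pose proof (II_shape P M Q t tp aR aL bR psi sg HS HaR HbR HaL Hsg Hpsi) as E.
  assert (Z0 : fR psi 0 = RtoC 0).
  { destruct Hpsi as (Hl & _). destruct (l2_decay psi Hl) as [Df _].
    apply (geom_not_decay (fR psi) (lamR P Q t aR bR sg)); auto.
    intro k. unfold fR at 1. rewrite E. rewrite <- (fR_mk (cpow (lamR P Q t aR bR sg)) (cpow (RtoC 0)) k).
    unfold fR. toC. ring. }
  intro x. rewrite E, Z0, C0_eq. toC. ring.
Qed.

Lemma II'_shape P M Q t tp aR aL bL psi sg : HypS P M Q t tp ->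
  0 < 1 - aL * aL -> Cnorm2 bL = 1 - aL * aL -> aR * aR = 1 -> sgn sg = - (t * aR) ->
  Kp P M Q t aR aL (RtoC 0) bL psi ->
  forall x, psi x = (fR psi 0 * mk (cpow (RtoC 0)) (cpow (lamL M Q t aL bL sg)) x)%C.
Proof.
  intros HS HaL HbL HaR Hsg HK.
  pose proof (recL _ _ _ _ _ _ _ _ _ _ HS HaL HbL HK (negb sg)) as RL.
  rewrite Bool.negb_involutive in RL.
  destruct HS as (HP & HM & Htp & HQ & HQ2 & Ht) eqn:HS'.
  pose proof (zero_side_R _ _ _ _ _ _ _ _ HQ Ht HaR HK) as ZR.
  destruct HK as (Hl & HR & HL & H0).
  assert (ML : (RtoC M * (bL * lamL M Q t aL bL sg))%C = RtoC (- (t * Q * aL) + sgn sg * Q)).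
  { apply lam_mul; auto; lra. }
  assert (HbL0 : (RtoC M * bL)%C <> RtoC 0).
  { intro E. destruct (Cmul_integral _ _ E) as [E1|E1].
    apply (RtoC_neq M); auto; lra. subst bL. rewrite Cnorm2_RtoC in HbL. lra. }
  assert (F1 : gL psi 1 = (lamL M Q t aL bL sg * gL psi 0)%C).
  { apply (Cmul_cancel (RtoC M * bL)); auto.
    apply Cmove in H0.
    transitivity (RtoC M * (bL * gL psi 1))%C. ring. rewrite H0, gL0.
    transitivity ((RtoC M * (bL * lamL M Q t aL bL sg)) * fR psi 0)%C. 2: ring.
    rewrite ML. replace (- (t * Q * aL) + sgn sg * Q) with (- (t * Q * (aR + aL))) by (rewrite Hsg; ring).
    rewrite RtoC_opp. ring. }
  apply ext_mk.
  - intro k. destruct k. simpl. ring. rewrite ZR. simpl. ring.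
  - intro k. rewrite (rec_geom (gL psi) _ _ RL F1 k), gL0. toC. ring.
Qed.

Lemma II'_good P M Q t tp aR aL bL sg : HypS P M Q t tp ->
  0 < 1 - aL * aL -> Cnorm2 bL = 1 - aL * aL -> aR * aR = 1 -> sgn sg = - (t * aR) ->
  Cnorm2 (lamL M Q t aL bL sg) < 1 -> dim1 (Kp P M Q t aR aL (RtoC 0) bL).
Proof.
  intros HS HaL HbL HaR Hsg G.
  exists (mk (cpow (RtoC 0)) (cpow (lamL M Q t aL bL sg))).
  destruct HS as (HP & HM & Htp & HQ & HQ2 & Ht) eqn:HS'.
  split; [|split].
  - split; [|split; [|split]].
    + apply mk_l2; auto. rewrite Cnorm2_RtoC. lra.
    + intro k. rewrite !fR_mk. rewrite Cconj_RtoC. rewrite !cpow_0n. ring.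
    + intro k. rewrite !gL_mk by reflexivity. unfold lamL. apply lam_root; auto. lra.
      apply (DL P M Q t tp aL HS).
    + rewrite !fR_mk, gL_mk by reflexivity. simpl cpow.
      transitivity (- (RtoC M * (bL * lamL M Q t aL bL sg)) - RtoC (t * Q * (aR + aL)))%C. ring.
      unfold lamL. rewrite !lam_mul by (auto; lra).
      rewrite <- RtoC_opp, <- !RtoC_minus. f_equal. rewrite Hsg. ring.
  - exists 0%Z. rewrite mk0. simpl. intro E. injection E. lra.
  - intros psi Hpsi. exists (fR psi 0). apply (II'_shape P M Q t tp aR aL bL psi sg HS); auto.
Qed.

Lemma II'_bad P M Q t tp aR aL bL sg : HypS P M Q t tp ->
  0 < 1 - aL * aL -> Cnorm2 bL = 1 - aL * aL -> aR * aR = 1 -> sgn sg = - (t * aR) ->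
  1 <= Cnorm2 (lamL M Q t aL bL sg) -> dim0 (Kp P M Q t aR aL (RtoC 0) bL).
Proof.
  intros HS HaL HbL HaR Hsg G psi Hpsi.
  pose proof (II'_shape P M Q t tp aR aL bL psi sg HS HaL HbL HaR Hsg Hpsi) as E.
  assert (Z0 : fR psi 0 = RtoC 0).
  { destruct Hpsi as (Hl & _). destruct (l2_decay psi Hl) as [_ Dg].
    rewrite <- gL0.
    apply (geom_not_decay (gL psi) (lamL M Q t aL bL sg)); auto.
    intro k. unfold gL at 1. rewrite E. rewrite gL0.
    rewrite <- (gL_mk (cpow (RtoC 0)) (cpow (lamL M Q t aL bL sg)) k) by reflexivity.
    unfold gL. toC. ring. }
  intro x. rewrite E, Z0, C0_eq. toC. ring.
Qed.

Lemma I_shape P M Q t tp aR aL psi : HypS P M Q t tp -> aR * aR = 1 -> aL * aL = 1 ->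
  Kp P M Q t aR aL (RtoC 0) (RtoC 0) psi ->
  forall x, psi x = (fR psi 0 * mk (cpow (RtoC 0)) (cpow (RtoC 0)) x)%C.
Proof.
  intros HS HaR HaL HK.
  destruct HS as (HP & HM & Htp & HQ & HQ2 & Ht) eqn:HS'.
  pose proof (zero_side_R _ _ _ _ _ _ _ _ HQ Ht HaR HK) as ZR.
  pose proof (zero_side_L _ _ _ _ _ _ _ _ HQ Ht HaL HK) as ZL.
  apply ext_mk.
  - intro k. destruct k. simpl. ring. rewrite ZR. simpl. ring.
  - intro k. destruct k. rewrite gL0. simpl. ring. rewrite ZL. simpl. ring.
Qed.

Lemma I_good P M Q t tp aR aL : HypS P M Q t tp -> aR * aR = 1 -> aL * aL = 1 -> aR + aL = 0 ->
  dim1 (Kp P M Q t aR aL (RtoC 0) (RtoC 0)).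
Proof.
  intros HS HaR HaL Hs.
  exists (mk (cpow (RtoC 0)) (cpow (RtoC 0))).
  destruct HS as (HP & HM & Htp & HQ & HQ2 & Ht) eqn:HS'.
  split; [|split].
  - split; [|split; [|split]].
    + apply mk_l2; rewrite Cnorm2_RtoC; lra.
    + intro k. rewrite !fR_mk. rewrite Cconj_RtoC. rewrite !cpow_0n. ring.
    + intro k. rewrite !gL_mk by reflexivity. rewrite Cconj_RtoC. rewrite !cpow_0n. ring.
    + rewrite !fR_mk, gL_mk by reflexivity. rewrite Hs. simpl cpow. rewrite Rmult_0_r. ring.
  - exists 0%Z. rewrite mk0. simpl. intro E. injection E. lra.
  - intros psi Hpsi. exists (fR psi 0). apply (I_shape P M Q t tp aR aL psi HS); auto.
Qed.

Lemma I_bad P M Q t tp aR aL : HypS P M Q t tp -> aR * aR = 1 -> aL * aL = 1 -> aR + aL <> 0 ->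
  dim0 (Kp P M Q t aR aL (RtoC 0) (RtoC 0)).
Proof.
  intros HS HaR HaL Hs psi Hpsi.
  pose proof (I_shape P M Q t tp aR aL psi HS HaR HaL Hpsi) as E.
  destruct HS as (HP & HM & Htp & HQ & HQ2 & Ht) eqn:HS'.
  assert (Z0 : fR psi 0 = RtoC 0).
  { destruct Hpsi as (_ & _ & _ & H0).
    assert (B : (RtoC (t * Q * (aR + aL)) * fR psi 0)%C = RtoC 0).
    { transitivity (- (RtoC P * (RtoC 0 * fR psi 1) - RtoC M * (RtoC 0 * gL psi 1)
         - RtoC (t * Q * (aR + aL)) * fR psi 0))%C. ring. rewrite H0. ring. }
    destruct (Cmul_integral _ _ B) as [D|D]; auto. exfalso.
    apply (RtoC_neq (t * Q * (aR + aL))); auto. intro Z.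
    apply Rmult_integral in Z. destruct Z as [Z|Z]; [|auto]. apply Rmult_integral in Z. destruct Z; nra. }
  intro x. rewrite E, Z0, C0_eq. toC. ring.
Qed.

Lemma to_kdim0 T K : (forall psi, in_kernel T psi <-> K psi) -> dim0 K -> kernel_dim T 0.
Proof. intros H D. apply kdim0. intros psi Hp. apply D. apply H. auto. Qed.

Lemma to_kdim1 T K : (forall psi, in_kernel T psi <-> K psi) -> dim1 K -> kernel_dim T 1.
Proof. intros H [e [Ke [nz D]]]. apply (kdim1 T e); auto.
  apply H; auto. intros psi Hp. apply D. apply H. auto. Qed.

Lemma coin_facts a1 a2 b : coin_ok a1 a2 b -> coin_nontrivial a1 a2 b ->
  a2 = - a1 /\ a1 * a1 + Cnorm2 b = 1.
Proof.
  intros [A [B C]] [N1 N2]. split; auto.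
  destruct (Req_dec (Cnorm2 b) 0) as [Z|Z].
  - apply Cnorm2_eq0 in Z. change (RtoC 0) with C0 in Z. subst b.
    change (Cnorm2 C0) with (0 * 0 + 0 * 0) in A, B.
    assert (a1 = 1 \/ a1 = -1) by nra. assert (a2 = 1 \/ a2 = -1) by nra.
    destruct H, H0; subst; try lra; exfalso; [apply N1 | apply N2]; auto.
  - assert (b <> RtoC 0). { intro E. rewrite E, Cnorm2_RtoC in Z. lra. }
    change Defs.Cmul with Cmult in C. rewrite CR_eq, C0_eq in C.
    destruct (Cmul_integral _ _ C) as [D|D]. contradiction.
    injection D. intro. lra.
Qed.

Lemma sign_exists x : x * x = 1 -> exists sg, sgn sg = x.
Proof. intro H. assert (x = 1 \/ x = -1) by nra. destruct H0; [exists true|exists false]; simpl; lra. Qed.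

Lemma bet0 q : bet q C0 = RtoC 0.
Proof. unfold bet. rewrite C0_eq. ring. Qed.

Theorem theorem4p2
  (p : R) (q : Cx) (a1 a2 : Z -> R) (b : Z -> Cx)
  (a1L a2L a1R a2R : R) (bL bR : Cx)
  (Hq : q <> C0) (Hpq : p * p + Cnorm2 q = 1)
  (Hcoin : forall x, coin_ok (a1 x) (a2 x) (b x))
  (HL : coin_ok a1L a2L bL) (HR : coin_ok a1R a2R bR)
  (HLnt : coin_nontrivial a1L a2L bL) (HRnt : coin_nontrivial a1R a2R bR)
  (HxR : forall x : Z, (1 <= x)%Z -> a1 x = a1R /\ a2 x = a2R /\ b x = bR)
  (HxL : forall x : Z, (x <= 0)%Z -> a1 x = a1L /\ a2 x = a2L /\ b x = bL) :
  let aL := a1L in let aR := a1R in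
  let d := fun (s : bool) (n : nat) => kernel_dim (Qeps s p q a1 a2 b) n in
  (* (1) Type I *)
  (bL = C0 -> bR = C0 -> forall s : bool,
     (aL * aR < 0 -> d s 1%nat) /\ (aL * aR > 0 -> d s 0%nat)) /\
  (* (2) Type II *)
  (bL = C0 -> bR <> C0 -> forall s : bool,
     (- sgn s * p + aL * aR < 0 -> d s 1%nat) /\
     (- sgn s * p + aL * aR >= 0 -> d s 0%nat)) /\
  (* (3) Type II' *)
  (bL <> C0 -> bR = C0 -> forall s : bool,
     (sgn s * p + aL * aR < 0 -> d s 1%nat) /\
     (sgn s * p + aL * aR >= 0 -> d s 0%nat)) /\
  (* (4) Type III *)
  (bL <> C0 -> bR <> C0 -> forall s : bool,
     ((aR < sgn s * p < aL \/ aL < - sgn s * p < aR) -> d s 1%nat) /\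
     (~ (aR < sgn s * p < aL \/ aL < - sgn s * p < aR) -> d s 0%nat)).
Proof.
  cbv zeta.
  destruct (coin_facts _ _ _ HL HLnt) as [EaL NL].
  destruct (coin_facts _ _ _ HR HRnt) as [EaR NR].
  assert (HxR' : forall x, (1 <= x)%Z -> a1 x = a1R /\ a2 x = - a1R /\ b x = bR).
  { intros x Hx. destruct (HxR x Hx) as [A [B C]]. rewrite B, EaR. auto. }
  assert (HxL' : forall x, (x <= 0)%Z -> a1 x = a1L /\ a2 x = - a1L /\ b x = bL).
  { intros x Hx. destruct (HxL x Hx) as [A [B C]]. rewrite B, EaL. auto. }
  assert (Nq : 0 < Cnorm2 q).
  { apply Cnorm2_pos. exact Hq. }
  assert (HQ : 0 < QQ q) by (unfold QQ, Cabs; apply sqrt_lt_R0; auto).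
  assert (HQ2 : QQ q * QQ q = 1 - p * p) by (unfold QQ, Cabs; rewrite sqrt_sqrt; lra).
  assert (Hp : -1 < p < 1) by nra.
  assert (Heps : Cnorm2 (expiArg q) = 1).
  { unfold expiArg. change Defs.Cmul with Cmult. rewrite CR_eq, Cnorm2_mul, Cnorm2_RtoC.
    unfold Cabs. rewrite <- Rinv_mult. rewrite sqrt_sqrt by lra. field. lra. }
  assert (Hbn : forall z, Cnorm2 (bet q z) = Cnorm2 z).
  { intro z. unfold bet. rewrite Cnorm2_mul, Heps. ring. }
  assert (HS : forall s, HypS (PP s p) (MM s p) (QQ q) (sgn s) (sgn s * p)).
  { intro s. unfold HypS, PP, MM. rewrite HQ2.
    destruct s; simpl; repeat split; try lra; ring. }
  assert (Hk : forall s psi, in_kernel (Qeps s p q a1 a2 b) psi <->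
     Kp (PP s p) (MM s p) (QQ q) (sgn s) a1R a1L (bet q bR) (Complex.Cconj (bet q bL)) psi).
  { intros s psi. exact (kernel_iff s p q a1 a2 b a1L a1R bL bR psi HxR' HxL'). }
  assert (Ht : forall s, sgn s * sgn s = 1) by apply sgn2.
  split; [|split; [|split]].
  -
    intros HbL HbR s. subst bL bR. rewrite bet0, Cconj_RtoC in Hk.
    change (Cnorm2 C0) with (0 * 0 + 0 * 0) in NL, NR.
    assert (aL2 : a1L * a1L = 1) by lra. assert (aR2 : a1R * a1R = 1) by lra.
    split; intro H.
    + apply (to_kdim1 _ _ (Hk s)). apply (I_good _ _ _ _ _ _ _ (HS s)); auto.
      assert (HH : (a1L * a1R) * (a1L * a1R) = 1) by
        (replace ((a1L * a1R) * (a1L * a1R)) with ((a1L * a1L) * (a1R * a1R)) by ring; rewrite aL2, aR2; ring).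
      assert (E1 : a1L * a1R = -1) by nra.
      assert (E2 : (a1R + a1L) * (a1R + a1L) = 0) by nra.
      destruct (Rmult_integral _ _ E2); auto.
    + apply (to_kdim0 _ _ (Hk s)). apply (I_bad _ _ _ _ _ _ _ (HS s)); auto.
      intro E. assert (a1L = - a1R) by lra. subst a1L. nra.
  -
    intros HbL HbR s. subst bL. rewrite bet0, Cconj_RtoC in Hk.
    change (Cnorm2 C0) with (0 * 0 + 0 * 0) in NL.
    assert (aL2 : a1L * a1L = 1) by lra.
    assert (PbR : 0 < Cnorm2 bR) by (apply Cnorm2_pos; exact HbR).
    assert (HaR : 0 < 1 - a1R * a1R) by lra.
    assert (HbR' : Cnorm2 (bet q bR) = 1 - a1R * a1R) by (rewrite Hbn; lra).
    destruct (sign_exists (sgn s * a1L)) as [sg Hsg].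
    { replace (sgn s * a1L * (sgn s * a1L)) with ((sgn s * sgn s) * (a1L * a1L)) by ring. rewrite Ht, aL2. ring. }
    pose proof (goodR_iff _ _ _ _ _ _ _ sg (HS s) HaR HbR') as G.
    rewrite Hsg in G.
    replace (sgn s * a1L * sgn s * a1R) with ((sgn s * sgn s) * (a1L * a1R)) in G by ring.
    rewrite Ht in G.
    split; intro H.
    + apply (to_kdim1 _ _ (Hk s)). apply (II_good _ _ _ _ _ _ _ _ sg (HS s)); auto. apply G. lra.
    + apply (to_kdim0 _ _ (Hk s)). apply (II_bad _ _ _ _ _ _ _ _ sg (HS s)); auto.
      destruct (Rlt_le_dec (Cnorm2 (lamR (PP s p) (QQ q) (sgn s) a1R (bet q bR) sg)) 1) as [A|A]; auto.
      apply G in A. lra.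
  -
    intros HbL HbR s. subst bR. rewrite bet0 in Hk.
    change (Cnorm2 C0) with (0 * 0 + 0 * 0) in NR.
    assert (aR2 : a1R * a1R = 1) by lra.
    assert (PbL : 0 < Cnorm2 bL) by (apply Cnorm2_pos; exact HbL).
    assert (HaL : 0 < 1 - a1L * a1L) by lra.
    assert (HbL' : Cnorm2 (Complex.Cconj (bet q bL)) = 1 - a1L * a1L) by (rewrite Cnorm2_conj, Hbn; lra).
    destruct (sign_exists (- (sgn s * a1R))) as [sg Hsg].
    { replace (- (sgn s * a1R) * - (sgn s * a1R)) with ((sgn s * sgn s) * (a1R * a1R)) by ring. rewrite Ht, aR2. ring. }
    pose proof (goodL_iff _ _ _ _ _ _ _ sg (HS s) HaL HbL') as G.
    rewrite Hsg in G.
    replace (- (sgn s * a1R) * sgn s * a1L) with (- ((sgn s * sgn s) * (a1L * a1R))) in G by ring.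
    rewrite Ht in G.
    split; intro H.
    + apply (to_kdim1 _ _ (Hk s)). apply (II'_good _ _ _ _ _ _ _ _ sg (HS s)); auto. apply G. lra.
    + apply (to_kdim0 _ _ (Hk s)). apply (II'_bad _ _ _ _ _ _ _ _ sg (HS s)); auto.
      destruct (Rlt_le_dec (Cnorm2 (lamL (MM s p) (QQ q) (sgn s) a1L (Complex.Cconj (bet q bL)) sg)) 1) as [A|A]; auto.
      apply G in A. lra.
  -
    intros HbL HbR s.
    assert (PbL : 0 < Cnorm2 bL) by (apply Cnorm2_pos; exact HbL).
    assert (HaL : 0 < 1 - a1L * a1L) by lra.
    assert (HbL' : Cnorm2 (Complex.Cconj (bet q bL)) = 1 - a1L * a1L) by (rewrite Cnorm2_conj, Hbn; lra).
    assert (PbR : 0 < Cnorm2 bR) by (apply Cnorm2_pos; exact HbR).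
    assert (HaR : 0 < 1 - a1R * a1R) by lra.
    assert (HbR' : Cnorm2 (bet q bR) = 1 - a1R * a1R) by (rewrite Hbn; lra).
    pose proof (fun sg => goodR_iff _ _ _ _ _ _ _ sg (HS s) HaR HbR') as GR.
    pose proof (fun sg => goodL_iff _ _ _ _ _ _ _ sg (HS s) HaL HbL') as GL.
    split; intro H.
    + apply (to_kdim1 _ _ (Hk s)).
      destruct H as [H|H].
      * destruct (sign_exists (sgn s) (Ht s)) as [sg Hsg].
        apply (III_good _ _ _ _ _ _ _ _ _ sg (HS s)); auto.
        apply GR. rewrite Hsg, Ht. lra. apply GL. rewrite Hsg, Ht. lra.
      * destruct (sign_exists (- sgn s)) as [sg Hsg]. { rewrite <- (Ht s). ring. }
        apply (III_good _ _ _ _ _ _ _ _ _ sg (HS s)); auto.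
        apply GR. rewrite Hsg. replace (- sgn s * sgn s * a1R) with (- (sgn s * sgn s) * a1R) by ring.
        rewrite Ht. lra.
        apply GL. rewrite Hsg. replace (- sgn s * sgn s * a1L) with (- (sgn s * sgn s) * a1L) by ring.
        rewrite Ht. lra.
    + apply (to_kdim0 _ _ (Hk s)).
      apply (III_none _ _ _ _ _ _ _ _ _ (HS s)); auto.
      intros sg [A B]. apply GR in A. apply GL in B. apply H.
      destruct s, sg; simpl in *; lra.
Qed.
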